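(* Let $\Bbbk$ be a field of characteristic zero, let $n\geq 3$, $d\geq 2$, and $S=\Bbbk[x_1,\ldots,x_n]$. Then for every integer $\mu \in\left[2n-1, \mathrm{HF}(S,d)-\mathrm{HF}(S,d-1)\right]$ there exists an artinian monomial ideal $I$ minimally generated by $\mu$ elements of degree $d$ such that $S/I$ fails the WLP by injectivity in degree $d-1$. Moreover, this interval is non-empty except for the cases $(n,d) \in \{(4,2),(3,3),(3,2)\}$.
   Context: $\mathrm{HF}(A,k)=\dim_\Bbbk A_k$. For a monomial ideal $I$, $A=S/I$ fails the WLP in degree $i$ if $\times(x_1+\cdots+x_n): A_i\to A_{i+1}$ does not have maximal rank; it fails the WLP by injectivity in degree $i$ if in addition $\mathrm{HF}(A,i)\le \mathrm{HF}(A,i+1)$. *)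

(* Defs.v *)
From HB Require Import structures.
From mathcomp Require Import all_boot all_order all_algebra.
From mathcomp Require Export mpoly.
Unset Printing Implicit Defensive.
Import GRing.Theory.
Local Open Scope ring_scope.

(* S = k[x_1..x_n] is {mpoly k[n]}; monomials are 'X_{1..n} (exponent vectors). *)

Definition in_mon_ideal (k : fieldType) {n : nat} (G : seq 'X_{1..n})
  (f : {mpoly k[n]}) : Prop :=
  exists h : 'I_(size G) -> {mpoly k[n]},
    f = \sum_(j < size G) h j * 'X_[(nth 0%MM G j)].

Definition minimal_gens (k : fieldType) {n : nat} (G : seq 'X_{1..n}) : Prop :=
  uniq G /\
  forall j : 'I_(size G),
    ~ in_mon_ideal k (rem (nth 0%MM G j) G) 'X_[(nth 0%MM G j)].

Definition artinian_quot (k : fieldType) {n : nat} (G : seq 'X_{1..n}) : Prop :=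
  exists N : nat, forall m : 'X_{1..n}, (N <= mdeg m)%N ->
    in_mon_ideal k G 'X_[m].

Definition lin_form (k : fieldType) (n : nat) : {mpoly k[n]} :=
  \sum_(i < n) 'X_i.

(* "There are r elements of A_i = S_i / I_i that are k-linearly independent",
   i.e. r <= HF(S/I, i) = dim_k A_i. *)
Definition indep_in_deg (k : fieldType) {n : nat} (G : seq 'X_{1..n})
  (i r : nat) : Prop :=
  exists f : 'I_r -> {mpoly k[n]},
    (forall j, f j \is i.-homog) /\
    forall c : 'I_r -> k,
      in_mon_ideal k G (\sum_(j < r) c j *: f j) -> forall j, c j = 0.

Definition HF_le_next (k : fieldType) {n : nat} (G : seq 'X_{1..n}) (i : nat) : Prop :=
  forall r, indep_in_deg k G i r -> indep_in_deg k G i.+1 r.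

Definition mul_l_injective (k : fieldType) {n : nat} (G : seq 'X_{1..n}) (i : nat) : Prop :=
  forall f : {mpoly k[n]}, f \is i.-homog ->
    in_mon_ideal k G (lin_form k n * f) -> in_mon_ideal k G f.

Definition mul_l_surjective (k : fieldType) {n : nat} (G : seq 'X_{1..n}) (i : nat) : Prop :=
  forall g : {mpoly k[n]}, g \is i.+1.-homog ->
    exists f : {mpoly k[n]}, f \is i.-homog /\
      in_mon_ideal k G (g - lin_form k n * f).

(* maximal rank of a linear map between finite-dimensional spaces
   = injective or surjective *)
Definition fails_WLP_in_deg (k : fieldType) {n : nat} (G : seq 'X_{1..n}) (i : nat) : Prop :=
  ~ (mul_l_injective k G i \/ mul_l_surjective k G i).

Definition fails_WLP_inj_in_deg (k : fieldType) {n : nat} (G : seq 'X_{1..n}) (i : nat) : Prop :=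
  fails_WLP_in_deg k G i /\ HF_le_next k G i.

(* HF(S, d) = number of monomials of degree d in n variables
   (they form a k-basis of S_d). *)
Definition HF_S (n d : nat) : nat :=
  #|[set m : 'X_{1..n < d.+1} | mdeg m == d]|.

(* Main.v *)
Require Import Defs.
From HB Require Import structures.
From mathcomp Require Import all_boot all_order all_algebra.
From mathcomp Require Import mpoly.
From mathcomp Require Import zify.
Import GRing.Theory.
Local Open Scope ring_scope.
Set Implicit Arguments. Unset Strict Implicit.

Definition alld (n d : nat) : seq 'X_{1..n} :=
  [seq val m | m <- enum [set m : 'X_{1..n < d.+1} | mdeg m == d]].

Lemma alld_uniq n d : uniq (alld n d).
Proof. by rewrite map_inj_uniq ?enum_uniq //; apply: val_inj. Qed.

Lemma mem_alld n d m : (m \in alld n d) = (mdeg m == d).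
Proof.
apply/mapP/idP => [[m' ]|/eqP hm].
  by rewrite mem_enum inE => hm ->.
have hb : (mdeg m < d.+1)%N by rewrite hm.
by exists (BMultinom hb) => //; rewrite mem_enum inE /= hm.
Qed.

Lemma size_alld n d : size (alld n d) = HF_S n d.
Proof. by rewrite size_map -cardE. Qed.

Lemma HF_S_eq n e : HF_S n.+1 e = 'C(e + n, e).
Proof.
rewrite -size_alld -(mpoly.size_basis n e); apply: perm_size.
apply: uniq_perm; rewrite ?alld_uniq ?mpoly.uniq_basis // => m.
by rewrite mem_alld mpoly.basis_cover.
Qed.
Section Ideal.
Variables (k : fieldType) (n : nat) (G : seq 'X_{1..n}).
Local Notation I := (in_mon_ideal k G).

Lemma ideal0 : I 0.
Proof. by exists (fun _ => 0); rewrite big1 // => j _; rewrite mul0r. Qed.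

Lemma idealD p q : I p -> I q -> I (p + q).
Proof.
move=> [h1 ->] [h2 ->]; exists (fun j => h1 j + h2 j).
by rewrite -big_split; apply: eq_bigr => j _; rewrite mulrDl.
Qed.

Lemma idealM q p : I p -> I (q * p).
Proof.
move=> [h ->]; exists (fun j => q * h j).
by rewrite mulr_sumr; apply: eq_bigr => j _; rewrite mulrA.
Qed.

Lemma idealZ c p : I p -> I (c *: p).
Proof. by move=> hp; rewrite -mul_mpolyC; apply: idealM. Qed.

Lemma idealN p : I p -> I (- p).
Proof. by move=> hp; rewrite -scaleN1r; apply: idealZ. Qed.

Lemma idealB p q : I p -> I q -> I (p - q).
Proof. by move=> hp hq; apply: idealD => //; apply: idealN. Qed.

Lemma ideal_sum (J : eqType) (s : seq J) (F : J -> {mpoly k[n]}) :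
  (forall j, j \in s -> I (F j)) -> I (\sum_(j <- s) F j).
Proof.
elim: s => [|a s IH] H; first by rewrite big_nil; apply: ideal0.
rewrite big_cons; apply: idealD; first by apply: H; rewrite inE eqxx.
by apply: IH => j js; apply: H; rewrite inE js orbT.
Qed.

Lemma idealX g : g \in G -> I 'X_[g].
Proof.
move=> gG; have hi : (index g G < size G)%N by rewrite index_mem.
exists (fun j => if j == Ordinal hi then 1 else 0).
rewrite (bigD1 (Ordinal hi)) //= eqxx mul1r nth_index // big1 ?addr0 //.
by move=> j /negbTE ->; rewrite mul0r.
Qed.

Lemma idealXu g u : g \in G -> I 'X_[u + g].
Proof. by move=> gG; rewrite mpolyXD; apply: idealM; apply: idealX. Qed.

Lemma ideal_coeff p m : I p -> (forall g u, g \in G -> m != (u + g)%MM) -> p@_m = 0.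
Proof.
move=> [h ->] hm; rewrite raddf_sum big1 // => j _ /=.
apply/eqP; apply: contraT => nz.
have : m \in msupp (h j * 'X_[nth 0%MM G j]) by rewrite mcoeff_msupp.
rewrite (perm_mem (msuppMX _ _)) => /mapP [u _ hu].
have gG : nth 0%MM G j \in G by apply: mem_nth.
by move: (hm _ u gG); rewrite hu addmC eqxx.
Qed.

End Ideal.

Section G0.
Variables (n d : nat).
Hypothesis hd : (2 <= d)%N.

Definition G0 : seq 'X_{1..n.+1} :=
  [seq (U_(ord0) *+ d.-1 + U_(i))%MM | i <- enum 'I_n.+1] ++
  [seq (U_(lift ord0 i) *+ d)%MM | i <- enum 'I_n].

Lemma G0_deg m : m \in G0 -> mdeg m = d.
Proof.
rewrite mem_cat => /orP [] /mapP [i _ ->].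
  by rewrite mdegD mdegMn !mdeg1 mul1n addn1 prednK // ltnW.
by rewrite mdegMn mdeg1 mul1n.
Qed.

Lemma G0_size : size G0 = (2 * n.+1 - 1)%N.
Proof. by rewrite size_cat !size_map -!enumT !size_enum_ord; lia. Qed.

Lemma G0_uniq : uniq G0.
Proof.
rewrite cat_uniq; apply/and3P; split.
- rewrite map_inj_uniq ?enum_uniq // => i j /mnmP /(_ i).
  rewrite !mnmDE !mulmnE !mnm1E eqxx.
  case: (j =P i) => [->|_] //; lia.
- apply/hasPn => m /mapP [i _ ->]; apply/mapP => [[j _ /mnmP /(_ ord0)]].
  rewrite !mnmDE !mulmnE !mnm1E eqxx; have := neq_lift ord0 i.
  rewrite eq_sym => /negbTE ->; lia.
- rewrite map_inj_uniq ?enum_uniq // => i j /mnmP /(_ (lift ord0 i)).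
  rewrite !mulmnE !mnm1E eqxx.
  case: (lift ord0 j =P lift ord0 i) => [/lift_inj -> //|_]; lia.
Qed.

Lemma G0_pure (i : 'I_n.+1) : (U_(i) *+ d)%MM \in G0.
Proof.
rewrite mem_cat; case: (unliftP ord0 i) => [j ->|->].
  by apply/orP; right; apply/mapP; exists j; rewrite ?mem_enum.
apply/orP; left; apply/mapP; exists ord0; rewrite ?mem_enum //.
apply/mnmP => j; rewrite !mnmDE !mulmnE !mnm1E.
case: (ord0 == j); lia.
Qed.

Lemma G0_lin (i : 'I_n.+1) : (U_(i) + U_(ord0) *+ d.-1)%MM \in G0.
Proof.
rewrite mem_cat; apply/orP; left; apply/mapP; exists i; rewrite ?mem_enum //.
by rewrite addmC.
Qed.

End G0.

Section Deg.
Variables (k : fieldType) (n d : nat) (G : seq 'X_{1..n}).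
Hypothesis hG : forall g, g \in G -> mdeg g = d.

Lemma coeff_low p m : in_mon_ideal k G p -> (mdeg m < d)%N -> p@_m = 0.
Proof.
move=> hp hm; apply: (ideal_coeff hp) => g u gG; apply/eqP => e.
by move: hm; rewrite e mdegD (hG gG); lia.
Qed.

Lemma coeff_out p m : in_mon_ideal k G p -> mdeg m = d -> m \notin G -> p@_m = 0.
Proof.
move=> hp hm mG; apply: (ideal_coeff hp) => g u gG; apply/eqP => e.
have : mdeg u = 0%N by move: hm; rewrite e mdegD (hG gG); lia.
move/eqP; rewrite mdeg_eq0 => /eqP u0.
by move: mG; rewrite e u0 add0m gG.
Qed.

End Deg.

Lemma artinian_G (k : fieldType) n d (G : seq 'X_{1..n.+1}) :
  (2 <= d)%N -> {subset G0 n d <= G} -> artinian_quot k G.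
Proof.
move=> hd sub; exists (n.+1 * d)%N => m hm.
have : [exists i, (d <= m i)%N].
  apply: contraT; rewrite negb_exists => /forallP H.
  have : (mdeg m <= \sum_(i < n.+1) d.-1)%N.
    rewrite mdegE; apply: leq_sum => i _.
    by move: (H i); rewrite -ltnNge; lia.
  by rewrite sum_nat_const card_ord; nia.
move=> /existsP [i hi].
have le : (U_(i) *+ d <= m)%MM.
  by apply/mnm_lepP => j; rewrite mulmnE mnm1E; case: (i =P j) => [<-|_]; lia.
rewrite -(submK le); apply: idealXu; apply: sub; exact: G0_pure.
Qed.
Lemma LI_bound (k : fieldType) (n e r : nat) (f : 'I_r -> {mpoly k[n.+1]}) :
  (forall j, f j \is e.-homog) ->
  (forall c : 'I_r -> k, \sum_(j < r) c j *: f j = 0 -> forall j, c j = 0) ->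
  (r <= 'C(e + n, e))%N.
Proof.
move=> hom li.
pose X := [tuple (DHomog (hom j) : dhomog n.+1 k e) | j < r].
have fX : free X.
  apply/freeP => c hc j; apply: li => //.
  have := congr1 val hc.
  rewrite raddf_sum /= => hc'.
  rewrite -[RHS]hc'.
  apply: eq_bigr => i _; congr (_ *: _).
  by rewrite (nth_map i) ?size_enum_ord // nth_ord_enum.
move: fX => /eqP; rewrite size_tuple => <-.
have := dimvS (subvf <<X>>%VS); rewrite dimvf.
done.
Qed.

Lemma size_filter_notin (T : eqType) (s G : seq T) :
  uniq s -> uniq G -> {subset G <= s} ->
  size [seq x <- s | x \notin G] = (size s - size G)%N.
Proof.
move=> us uG sub.
have h1 : count (mem G) s = size G.
  rewrite -size_filter; apply: perm_size; apply: uniq_perm.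
  - exact: filter_uniq.
  - exact: uG.
  by move=> x; rewrite mem_filter andb_idr //; apply: sub.
have := count_predC (mem G) s; rewrite size_filter h1.
have -> : count (predC (mem G)) s = count (fun x => x \notin G) s by [].
lia.
Qed.

Section Main.
Variables (k : fieldType) (n d mu : nat).
Hypothesis hd : (2 <= d)%N.
Hypothesis hmu : (size (G0 n d) <= mu <= HF_S n.+1 d - HF_S n.+1 d.-1)%N.

Definition avail0 := [seq m <- alld n.+1 d | m \notin G0 n d].
Definition Gmu := G0 n d ++ take (mu - size (G0 n d)) avail0.

Lemma G0_alld : {subset G0 n d <= alld n.+1 d}.
Proof. by move=> m hm; rewrite mem_alld (G0_deg hd hm). Qed.

Lemma Gmu_size : size Gmu = mu.
Proof.
rewrite size_cat size_take /avail0 size_filter_notin ?alld_uniq ?G0_uniq //;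
  last exact: G0_alld.
rewrite size_alld; case/andP: hmu => h1 h2; case: ltnP => h3; rewrite ?G0_size in h1 h3 *; lia.
Qed.

Lemma Gmu_deg m : m \in Gmu -> mdeg m = d.
Proof.
rewrite mem_cat => /orP [h|/mem_take]; first exact: G0_deg h.
by rewrite mem_filter mem_alld => /andP [_ /eqP].
Qed.

Lemma Gmu_uniq : uniq Gmu.
Proof.
rewrite cat_uniq G0_uniq //=; apply/andP; split.
  apply/hasPn => m /mem_take; rewrite mem_filter => /andP [h _] //.
by apply: take_uniq; apply: filter_uniq; apply: alld_uniq.
Qed.

Lemma G0_Gmu : {subset G0 n d <= Gmu}.
Proof. by move=> m hm; rewrite mem_cat hm. Qed.

Definition L := [seq m <- alld n.+1 d | m \notin Gmu].

Lemma L_size : size L = (HF_S n.+1 d - mu)%N.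
Proof.
rewrite size_filter_notin ?alld_uniq ?Gmu_uniq ?Gmu_size ?size_alld //.
by move=> m /Gmu_deg hm; rewrite mem_alld hm.
Qed.

Lemma L_big : (HF_S n.+1 d.-1 <= size L)%N.
Proof. rewrite L_size; case/andP: hmu; rewrite G0_size; lia. Qed.

Lemma L_uniq : uniq L.
Proof. by apply: filter_uniq; apply: alld_uniq. Qed.

Lemma L_mem m : m \in L -> mdeg m = d /\ m \notin Gmu.
Proof. by rewrite mem_filter mem_alld => /andP [h /eqP]. Qed.

Lemma indepL r (c : 'I_r -> k) : (r <= size L)%N ->
  in_mon_ideal k Gmu (\sum_(j < r) c j *: 'X_[nth 0%MM L j]) -> forall j, c j = 0.
Proof.
move=> hr hI j.
have hj : (j < size L)%N by apply: leq_trans hr.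
have [hdeg hnot] := L_mem (mem_nth 0%MM hj).
have := coeff_out Gmu_deg hI hdeg hnot.
rewrite raddf_sum (bigD1 j) //= mcoeffZ mcoeffX eqxx mulr1 big1 ?addr0 //.
move=> i /negbTE ne; rewrite mcoeffZ mcoeffX nth_uniq ?L_uniq //.
- by rewrite (inj_eq val_inj) ne mulr0.
- exact: leq_trans (ltn_ord i) hr.
Qed.

Definition x0 : 'X_{1..n.+1} := (U_(ord0) *+ d.-1)%MM.

Lemma x0_deg : mdeg x0 = d.-1.
Proof. by rewrite mdegMn mdeg1 mul1n. Qed.

Lemma x0_notin : ~ in_mon_ideal k Gmu 'X_[x0].
Proof.
move=> h; have h1 : (mdeg x0 < d)%N by rewrite x0_deg; lia.
have := coeff_low Gmu_deg h h1.
by rewrite mcoeffX eqxx => /eqP; rewrite oner_eq0.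
Qed.

Lemma lx0_in : in_mon_ideal k Gmu (lin_form k n.+1 * 'X_[x0]).
Proof.
rewrite /lin_form mulr_suml; apply: ideal_sum => i _.
rewrite -mpolyXD; apply: idealX; apply: G0_Gmu; exact: G0_lin.
Qed.

Lemma not_inj : ~ mul_l_injective k Gmu d.-1.
Proof.
move=> h; apply: x0_notin; apply: h lx0_in.
by rewrite dhomogX; apply/eqP; exact: x0_deg.
Qed.

Lemma indep_bound r : indep_in_deg k Gmu d.-1 r -> (r <= HF_S n.+1 d.-1)%N.
Proof.
move=> [f [hom li]]; rewrite HF_S_eq; apply: (LI_bound hom) => c hc.
by apply: li; rewrite hc; apply: ideal0.
Qed.

Lemma HF_le : HF_le_next k Gmu d.-1.
Proof.
move=> r /indep_bound hr.
have hrL : (r <= size L)%N by apply: leq_trans hr L_big.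
exists (fun j : 'I_r => 'X_[nth 0%MM L j]); split.
  move=> j; rewrite dhomogX prednK ?(ltn_trans _ hd) //; apply/eqP.
  exact: (L_mem (mem_nth 0%MM (leq_trans (ltn_ord j) hrL))).1.
by move=> c; apply: indepL.
Qed.

Lemma not_surj : ~ mul_l_surjective k Gmu d.-1.
Proof.
move=> hs.
pose K := size L.
have ex : forall j : 'I_K, exists f, f \is d.-1.-homog /\
    in_mon_ideal k Gmu ('X_[nth 0%MM L j] - lin_form k n.+1 * f).
  move=> j; apply: hs; rewrite prednK ?(ltn_trans _ hd) // dhomogX; apply/eqP.
  exact: (L_mem (mem_nth 0%MM (ltn_ord j))).1.
have [f hf] := fin_all_exists ex.
pose F (j : 'I_K.+1) := if unlift ord_max j is Some j' then f j' else 'X_[x0].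
have homF : forall j, F j \is d.-1.-homog.
  move=> j; rewrite /F; case: unliftP => [j' _|_]; first exact: (hf j').1.
  by rewrite dhomogX; apply/eqP; exact: x0_deg.
suff : (K.+1 <= 'C(d.-1 + n, d.-1))%N.
  by rewrite -HF_S_eq; have := L_big; lia.
apply: (LI_bound homF) => c hc.
rewrite big_ord_recr /= in hc.
have wl : forall j : 'I_K, widen_ord (leqnSn K) j = lift ord_max j.
  by move=> j; apply: val_inj; exact: esym (lift_max j).
have Fw : forall j : 'I_K, F (widen_ord (leqnSn K) j) = f j.
  by move=> j; rewrite /F wl liftK.
have Fm : F ord_max = 'X_[x0] by rewrite /F unlift_none.
have c0 : forall j : 'I_K, c (widen_ord (leqnSn K) j) = 0.
  apply: indepL => //.
  have e : \sum_(j < K) c (widen_ord (leqnSn K) j) *: 'X_[nth 0%MM L j] =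
    \sum_(j < K) c (widen_ord (leqnSn K) j) *:
       ('X_[nth 0%MM L j] - lin_form k n.+1 * f j) +
    lin_form k n.+1 *
      \sum_(j < K) c (widen_ord (leqnSn K) j) *: F (widen_ord (leqnSn K) j).
    rewrite mulr_sumr -big_split; apply: eq_bigr => j _.
    by rewrite Fw -scalerAr scalerBr; exact/esym/subrK.
  rewrite e; apply: idealD.
    by apply: ideal_sum => j _; apply: idealZ; exact: (hf j).2.
  have -> : \sum_(j < K) c (widen_ord (leqnSn K) j) *: F (widen_ord (leqnSn K) j)
      = - (c ord_max *: F ord_max).
    by apply/eqP; rewrite -addr_eq0 hc.
  rewrite Fm mulrN; apply: idealN; rewrite -scalerAr; apply: idealZ.
  exact: lx0_in.
have cm : c ord_max = 0.
  move: hc; rewrite big1 ?add0r; last by move=> j _; rewrite c0 scale0r.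
  rewrite Fm => /(congr1 (mcoeff x0)).
  by rewrite mcoeffZ mcoeffX eqxx mulr1 mcoeff0.
move=> j; case: (unliftP ord_max j) => [j' ->|->] //.
rewrite -wl; exact: c0.
Qed.

Lemma Gmu_min : minimal_gens k Gmu.
Proof.
split; first exact: Gmu_uniq.
move=> j h.
have hj : nth 0%MM Gmu j \in Gmu by apply: mem_nth.
have hdeg : forall g, g \in rem (nth 0%MM Gmu j) Gmu -> mdeg g = d.
  by move=> g /mem_rem; apply: Gmu_deg.
have := coeff_out hdeg h (Gmu_deg hj).
rewrite mem_rem_uniqF ?Gmu_uniq // mcoeffX eqxx => /(_ isT)/eqP.
by rewrite oner_eq0.
Qed.

End Main.
Lemma bin2_ge c : (2 * c + 9 <= 'C(c + 5, 2))%N.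
Proof.
elim: c => [|c IH]; first by [].
rewrite addSn binS bin1; lia.
Qed.

Lemma Dsym a b : 'C(b + a.+1, b.+1) = 'C(b + a.+1, a).
Proof.
rewrite -bin_sub; last lia.
by congr 'C(_, _); lia.
Qed.

Lemma numeric n d : (3 <= n)%N -> (2 <= d)%N ->
  ((2 * n - 1 <= HF_S n d - HF_S n (d - 1))%N <->
     ~ ((n, d) \in [:: (4, 2); (3, 3); (3, 2)]%N)).
Proof.
case: n => [|[|[|a]]] //; case: d => [|[|b]] // _ _.
have -> : (b.+2 - 1 = b.+1)%N by lia.
rewrite !HF_S_eq.
have -> : (b.+2 + a.+2 = (b.+1 + a.+2).+1)%N by lia.
rewrite binS addnK Dsym.
case: a => [|[|a]].
- rewrite bin1; case: b => [|[|b]] /=; split => //; lia.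
- case: b => [|b] /=; first by split.
  split => // _; apply: leq_trans (_ : 'C(5, 2) <= _)%N => //.
  apply: leq_bin2l; lia.
- split => // _.
  apply: leq_trans (_ : 'C(a.+3.+2, a.+3) <= _)%N; last by apply: leq_bin2l; lia.
  have -> : 'C(a.+3.+2, a.+3) = 'C(a + 5, 2).
    rewrite -bin_sub; last lia.
    by congr 'C(_, _); lia.
  have := bin2_ge a; lia.
Qed.

Unset Implicit Arguments.

Theorem corollary4p4 (k : fieldType) (char0 : [pchar k] =i pred0)
  (n d : nat) (Hn : (3 <= n)%N) (Hd : (2 <= d)%N) :
  (forall mu : nat,
      (2 * n - 1 <= mu <= HF_S n d - HF_S n (d - 1))%N ->
      exists G : seq 'X_{1..n},
        size G = mu /\
        (forall m, m \in G -> mdeg m = d) /\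
        minimal_gens k G /\
        artinian_quot k G /\
        fails_WLP_inj_in_deg k G (d - 1))
  /\
  ((2 * n - 1 <= HF_S n d - HF_S n (d - 1))%N <->
     ~ ((n, d) \in [:: (4, 2); (3, 3); (3, 2)]%N)).
Proof.
split; last exact: numeric.
case: n Hn => [|n] // Hn mu hmu.
have hmu' : (size (G0 n d) <= mu <= HF_S n.+1 d - HF_S n.+1 d.-1)%N.
  by move: hmu; rewrite G0_size ?(subn1 d).
exists (@Gmu n d mu); split; first exact: (Gmu_size Hd hmu').
split; first by move=> m; apply: (Gmu_deg Hd).
split; first exact: (Gmu_min k n mu Hd).
split; first by apply: (artinian_G k Hd); apply: G0_Gmu.
rewrite (subn1 d); split; last exact: (HF_le Hd hmu').
by case => [/(not_inj Hd)|/(not_surj Hd hmu')].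
Qed.
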